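(* Let $n\ge 2$, $N=n(n-1)/2$, $1\le i<j\le n$, $\phi,\alpha\in\mathbb{R}$, and let $U=R(i,j,\phi,\alpha)$. Let $\mathcal{R}=\mathcal{R}_{ij}(U)\in\mathbb{C}^{2N\times 2N}$ be the Jacobi annihilator. Then $\mathcal{R}$ agrees with the identity matrix $I_{2N}$ outside exactly $2n-2$ principal submatrices, which are determined by $$\mathcal{R}_{\tau(i,j),\tau(i,j)}=0,\qquad \mathcal{R}_{\tau(j,i),\tau(j,i)}=0,$$ and, for every $1\le r\le n$ with $r\notin\{i,j\}$, $$\begin{bmatrix}\mathcal{R}_{\tau(r,i),\tau(r,i)} & \mathcal{R}_{\tau(r,i),\tau(r,j)}\\ \mathcal{R}_{\tau(r,j),\tau(r,i)} & \mathcal{R}_{\tau(r,j),\tau(r,j)}\end{bmatrix}=\begin{bmatrix}\cos\phi & e^{-\imath\alpha}\sin\phi\\ -e^{\imath\alpha}\sin\phi & \cos\phi\end{bmatrix},$$ $$\begin{bmatrix}\mathcal{R}_{\tau(i,r),\tau(i,r)} & \mathcal{R}_{\tau(i,r),\tau(j,r)}\\ \mathcal{R}_{\tau(j,r),\tau(i,r)} & \mathcal{R}_{\tau(j,r),\tau(j,r)}\end{bmatrix}=\begin{bmatrix}\cos\phi & e^{\imath\alpha}\sin\phi\\ -e^{-\imath\alpha}\sin\phi & \cos\phi\end{bmatrix}.$$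
   Context: $\imath=\sqrt{-1}$. For $1\le i<j\le n$ and real $\phi,\alpha$, the complex plane rotation $R(i,j,\phi,\alpha)$ is the $n\times n$ matrix equal to $I_n$ except for the entries $(i,i)$ and $(j,j)$, both equal to $\cos\phi$, the entry $(i,j)$ equal to $-e^{\imath\alpha}\sin\phi$, and the entry $(j,i)$ equal to $e^{-\imath\alpha}\sin\phi$. Let $N=n(n-1)/2$. For $A=(a_{st})\in\mathbb{C}^{n\times n}$ and $2\le s,t\le n$ put $c_t=(a_{1t},a_{2t},\dots,a_{t-1,t})^T$ and $r_s=(a_{s1},\dots,a_{s,s-1})$, and define the linear map $\mathrm{ve}:\mathbb{C}^{n\times n}\to\mathbb{C}^{2N}$ by $\mathrm{ve}(A)=[c_2^T,c_3^T,\dots,c_n^T,r_2,r_3,\dots,r_n]^T$. Define $\tau(s,t)=(t-1)(t-2)/2+s$ for $1\le s<t\le n$ and $\tau(s,t)=\tau(t,s)+N$ for $1\le t<s\le n$; thus $\tau(s,t)$ is the position of $a_{st}$ in $\mathrm{ve}(A)$. Let $\nu_{ij}:\mathbb{C}^{n\times n}\to\mathbb{C}^{n\times n}$ be the linear map that sets the entries in positions $(i,j)$ and $(j,i)$ to zero. For $U=R(i,j,\phi,\alpha)$, the Jacobi annihilator $\mathcal{R}_{ij}(U)$ is the unique $2N\times 2N$ matrix with $\mathcal{R}_{ij}(U)\,\mathrm{ve}(A)=\mathrm{ve}(\nu_{ij}(U^*AU))$ for all $A\in\mathbb{C}^{n\times n}$ (well defined since $\mathrm{ve}$ is surjective and $\mathrm{ve}(\nu_{ij}(U^*AU))$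 depends only on the off-diagonal entries of $A$). *)

(* Defs.v *)
From HB Require Import structures.
From mathcomp Require Import all_boot all_order all_algebra.
From mathcomp Require Import all_classical all_reals all_analysis.
From mathcomp Require Import complex.
Set Implicit Arguments. Unset Strict Implicit. Unset Printing Implicit Defensive.
Import Order.TTheory GRing.Theory Num.Theory.
Local Open Scope ring_scope.
Local Open Scope complex_scope.

(* Conventions: indices are 0-based ('I_n), so the paper's index s
   corresponds to our s - 1; positions in ve(A) are likewise 0-based. *)

Section Defs.
Variable R : realType.
Local Notation C := R[i].

Definition expi (a : R) : C := (cos a) +i* (sin a).

Definition plane_rot (n : nat) (i j : 'I_n) (phi alpha : R) : 'M[C]_n :=
  \matrix_(s, t)
    if ((s == i) && (t == i)) || ((s == j) && (t == j)) then (cos phi)%:C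
    else if (s == i) && (t == j) then - (expi alpha * (sin phi)%:C)
    else if (s == j) && (t == i) then expi (- alpha) * (sin phi)%:C
    else (s == t)%:R.

Definition adjmx (n : nat) (U : 'M[C]_n) : 'M[C]_n := map_mx (@conjc R) U^T.

Definition nu (n : nat) (i j : 'I_n) (A : 'M[C]_n) : 'M[C]_n :=
  \matrix_(s, t)
    if ((s == i) && (t == j)) || ((s == j) && (t == i)) then 0 else A s t.
End Defs.

Definition NN (n : nat) : nat := (n * (n - 1)) %/ 2.

(* 0-based tau: the paper's tau(s+1,t+1) - 1.  For s < t it is
   t(t-1)/2 + s, for t < s it is tau(t,s) + N.  (Diagonal: unused.) *)
Definition tau0 (n : nat) (s t : 'I_n) : nat :=
  if (s < t)%N then ((t * (t - 1)) %/ 2 + s)%N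
  else ((s * (s - 1)) %/ 2 + t + NN n)%N.

Section Ve.
Variable R : realType.
Local Notation C := R[i].

(* ve(A): entry a_{st} (s <> t) sits at position tau(s,t). *)
Definition ve (n : nat) (A : 'M[C]_n) : 'cV[C]_(NN n + NN n) :=
  \col_p \sum_(s < n) \sum_(t < n | s != t)
           (if tau0 s t == val p then A s t else 0).

Definition is_jacobi_annihilator (n : nat) (i j : 'I_n) (U : 'M[C]_n)
  (M : 'M[C]_(NN n + NN n)) : Prop :=
  forall A : 'M[C]_n, M *m ve A = ve (nu i j (adjmx U *m A *m U)).

Definition entry_is (m : nat) (M : 'M[C]_m) (a b : nat) (x : C) : Prop :=
  forall p q : 'I_m, val p = a -> val q = b -> M p q = x.

Definition in_blocks (n : nat) (i j : 'I_n) (p q : nat) : Prop :=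
  (p = tau0 i j /\ q = tau0 i j) \/ (p = tau0 j i /\ q = tau0 j i) \/
  exists r : 'I_n, r != i /\ r != j /\
    (((p = tau0 r i \/ p = tau0 r j) /\ (q = tau0 r i \/ q = tau0 r j)) \/
     ((p = tau0 i r \/ p = tau0 j r) /\ (q = tau0 i r \/ q = tau0 j r))).
End Ve.

(* Main.v *)
Require Import Defs.
From HB Require Import structures.
From mathcomp Require Import all_boot all_order all_algebra.
From mathcomp Require Import all_classical all_reals all_analysis.
From mathcomp Require Import complex.
From mathcomp Require Import zify.
Import Order.TTheory GRing.Theory Num.Theory.
Definition T (t : nat) := (t * (t - 1)) %/ 2.
Lemma TS t : T t.+1 = T t + t.
Proof. rewrite /T. case: t => [//|u]. rewrite !subSS !subn0.
have -> : (u.+2 * u.+1 = u.+1 * 2 + u.+1 * u)%N by nia.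
by rewrite divnMDl // addnC.
Qed.

Lemma Tmono t t' : t < t' -> T t + t <= T t'.
Proof.
elim: t' => [//|t' IH]; rewrite ltnS leq_eqVlt => /orP[/eqP->|/IH h].
  by rewrite TS.
rewrite TS; lia.
Qed.

Arguments Tmono {t t'}.
Lemma Tle t t' : t <= t' -> T t <= T t'.
Proof. rewrite leq_eqVlt => /orP[/eqP->//|/Tmono]; lia. Qed.

Arguments Tle {t t'}.
Lemma Tpair_inj s t s' t' : s < t -> s' < t' -> T t + s = T t' + s' -> t = t' /\ s = s'.
Proof.
move=> h1 h2 e.
case: (ltngtP t t') => [lt|lt|eq].
- have := Tmono lt; lia.
- have := Tmono lt; lia.
- subst; lia.
Qed.

Arguments Tpair_inj {s t s' t'}.
Lemma Tsurj m p : p < T m -> exists t s, [/\ s < t, t < m & p = T t + s].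
Proof.
elim: m => [//|m IH]; rewrite TS => hp.
case: (ltnP p (T m)) => h.
  by have [t [s [h1 h2 h3]]] := IH h; exists t, s; split => //; lia.
exists m, (p - T m); split; lia.
Qed.

Arguments Tsurj {m p}.
Lemma tau0E n (s t : 'I_n) : tau0 s t = if s < t then T t + s else T s + t + T n.
Proof. by []. Qed.

Lemma tau_lt n (s t : 'I_n) : s != t -> tau0 s t < NN n + NN n.
Proof.
rewrite tau0E /NN -/(T n) => ne.
have hs := ltn_ord s; have ht := ltn_ord t.
case: (ltnP s t) => h.
  have := Tmono ht; lia.
have h' : t < s by rewrite ltn_neqAle h eq_sym ne.
have := Tmono hs; lia.
Qed.

Lemma tau_inj n (s t s' t' : 'I_n) : s != t -> s' != t' ->
  tau0 s t = tau0 s' t' -> s = s' /\ t = t'.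
Proof.
rewrite !tau0E => ne ne' e.
have hs := ltn_ord s; have ht := ltn_ord t.
have hs' := ltn_ord s'; have ht' := ltn_ord t'.
have ne1 : (s : nat) <> t by move=> /val_inj/eqP; rewrite (negbTE ne).
have ne2 : (s' : nat) <> t' by move=> /val_inj/eqP; rewrite (negbTE ne').
move: e; case: (ltnP s t) => h; case: (ltnP s' t') => h'.
- move=> e; have [a b] := Tpair_inj h h' e; split; exact: val_inj.
- move=> e. have : T s' + t' + T n >= T n by lia.
  have := Tmono ht; lia.
- move=> e. have : T s + t + T n >= T n by lia.
  have := Tmono ht'; lia.
- move=> e. have e2 : T s + t = T s' + t' by lia.
  have ha : t < s by lia. have hb : t' < s' by lia.
  have [a b] := Tpair_inj ha hb e2.
  split; exact: val_inj.
Qed.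

Lemma tau_surj n (p : nat) : p < NN n + NN n ->
  exists s t : 'I_n, s != t /\ tau0 s t = p.
Proof.
rewrite /NN -/(T n) => hp.
case: (ltnP p (T n)) => h.
  have [t [s [h1 h2 h3]]] := Tsurj h.
  have hs : s < n by lia.
  exists (Ordinal hs), (Ordinal h2); split.
    by rewrite -val_eqE /=; lia.
  by rewrite tau0E /= h1.
have hh : p - T n < T n by lia.
have [t [s [h1 h2 h3]]] := Tsurj hh.
have hs : s < n by lia.
exists (Ordinal h2), (Ordinal hs); split.
  by rewrite -val_eqE /=; lia.
by rewrite tau0E /= ltnNge (ltnW h1) /=; lia.
Qed.

Local Open Scope ring_scope.
Local Open Scope complex_scope.
Arguments tau_inj {n s t s' t'}.
Arguments tau_lt {n s t}.
Arguments tau_surj {n p}.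
Section Mx.
Variable R : realType.
Local Notation C := R[i].
Variables (n : nat) (i j : 'I_n) (phi alpha : R).
Hypothesis hij : i != j.
Local Notation U := (plane_rot i j phi alpha).

Lemma conjb (b : bool) : conjc (b%:R : C) = b%:R.
Proof. by case: b; apply/eqP; rewrite eq_complex /= oppr0 !eqxx. Qed.

Lemma Ux_out {x} y : x != i -> x != j -> U x y = (x == y)%:R.
Proof. by move=> h1 h2; rewrite mxE (negbTE h1) (negbTE h2). Qed.

Lemma Uy_out x {y} : y != i -> y != j -> U x y = (x == y)%:R.
Proof. by move=> h1 h2; rewrite mxE (negbTE h1) (negbTE h2) !andbF. Qed.

Lemma Uii : U i i = (cos phi)%:C. Proof. by rewrite mxE !eqxx. Qed.
Lemma Ujj : U j j = (cos phi)%:C. Proof. by rewrite mxE !eqxx orbT. Qed.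
Lemma Uij : U i j = - (expi alpha * (sin phi)%:C).
Proof. by rewrite mxE !eqxx (negbTE hij) eq_sym (negbTE hij). Qed.
Lemma Uji : U j i = expi (- alpha) * (sin phi)%:C.
Proof. by rewrite mxE !eqxx (negbTE hij) eq_sym (negbTE hij). Qed.

Lemma ve_entry (A : 'M[C]_n) {a b : 'I_n} {p : 'I_(NN n + NN n)} :
  a != b -> val p = tau0 a b -> ve A p 0 = A a b.
Proof.
move=> ab hp; rewrite mxE (bigD1 a) //= (bigD1 b) //= hp eqxx.
rewrite big1 ?addr0; last first.
  move=> t /andP[h1 h2]; case: eqP => // /esym e.
  by have [_ /eqP] := tau_inj ab h1 e; rewrite eq_sym (negbTE h2).
rewrite big1 ?addr0 // => s hs; rewrite big1 // => t st.
case: eqP => // /esym e.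
by have [/eqP] := tau_inj ab st e; rewrite eq_sym (negbTE hs).
Qed.

Lemma veD (A B : 'M[C]_n) : ve (A + B) = ve A + ve B.
Proof.
apply/matrixP => p k; rewrite !mxE -big_split /=; apply: eq_bigr => s _.
rewrite -big_split /=; apply: eq_bigr => t _; rewrite mxE.
by case: ifP; rewrite ?addr0.
Qed.

Lemma veZ a (A : 'M[C]_n) : ve (a *: A) = a *: ve A.
Proof.
apply/matrixP => p k; rewrite !mxE mulr_sumr; apply: eq_bigr => s _.
rewrite mulr_sumr; apply: eq_bigr => t _; rewrite mxE.
by case: ifP; rewrite ?mulr0.
Qed.

Lemma ve0 : ve (0 : 'M[C]_n) = 0.
Proof. by rewrite -(scale0r 0) veZ scale0r. Qed.

Lemma ve_sum (I : finType) (F : I -> 'M[C]_n) : ve (\sum_k F k) = \sum_k ve (F k).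
Proof. exact: (big_morph _ veD ve0). Qed.

Lemma nuD (A B : 'M[C]_n) : nu i j (A + B) = nu i j A + nu i j B.
Proof. by apply/matrixP => s t; rewrite !mxE; case: ifP; rewrite ?addr0. Qed.

Lemma nuZ a (A : 'M[C]_n) : nu i j (a *: A) = a *: nu i j A.
Proof. by apply/matrixP => s t; rewrite !mxE; case: ifP; rewrite ?mulr0. Qed.

Lemma nu0 : nu i j (0 : 'M[C]_n) = 0.
Proof. by apply/matrixP => s t; rewrite !mxE; case: ifP. Qed.

Lemma nu_sum (I : finType) (F : I -> 'M[C]_n) : nu i j (\sum_k F k) = \sum_k nu i j (F k).
Proof. exact: (big_morph _ nuD nu0). Qed.

Lemma tripleG (X Y : 'M[C]_n) (c d a b : 'I_n) :
  (X *m delta_mx c d *m Y) a b = X a c * Y d b.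
Proof.
have E k : (X *m delta_mx c d) a k = X a c * (k == d)%:R.
  rewrite mxE (bigD1 c) //= big1 => [|l hl]; first by rewrite mxE eqxx /= addr0.
  by rewrite mxE (negbTE hl) mulr0.
rewrite mxE (bigD1 d) //= big1 => [|k hk]; rewrite E.
  by rewrite eqxx mulr1 addr0.
by rewrite (negbTE hk) mulr0 mul0r.
Qed.

Lemma triple (c d a b : 'I_n) :
  (adjmx U *m delta_mx c d *m U) a b = conjc (U c a) * U d b.
Proof. by rewrite tripleG !mxE. Qed.

Local Notation NP := 'I_(NN n + NN n).

Lemma pq_eq {a b c d : 'I_n} {p q : NP} : a != b -> c != d ->
  val p = tau0 a b -> val q = tau0 c d -> (p == q) = (a == c) && (b == d).
Proof.
move=> ab cd hp hq; apply/eqP/andP => [e|[/eqP ea /eqP eb]].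
  have [-> ->] := tau_inj ab cd (etrans (esym hp) (etrans (congr1 val e) hq)).
  by rewrite !eqxx.
by apply: val_inj; rewrite hp hq ea eb.
Qed.

Lemma ve_delta {c d : 'I_n} {q : NP} : c != d -> val q = tau0 c d ->
  ve (delta_mx c d : 'M[C]_n) = delta_mx q 0.
Proof.
move=> cd hq; apply/matrixP => p k; rewrite [k]ord1.
have [s [t [st hp]]] := tau_surj (ltn_ord p).
rewrite (ve_entry _ st (esym hp)) !mxE eqxx andbT.
by rewrite (pq_eq st cd (esym hp) hq).
Qed.

Lemma ve_diag (c : 'I_n) : ve (delta_mx c c : 'M[C]_n) = 0.
Proof.
apply/matrixP => p k; rewrite !mxE big1 // => s _; rewrite big1 // => t st.
rewrite mxE; case: ifP => // _.
case: (s =P c) => [es|]; case: (t =P c) => [et|] //=.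
by rewrite es et eqxx in st.
Qed.

Lemma Mform (M : 'M[C]_(NN n + NN n)) :
  is_jacobi_annihilator i j U M ->
  forall (a b c d : 'I_n) (p q : NP), a != b -> c != d ->
  val p = tau0 a b -> val q = tau0 c d ->
  M p q = if ((a == i) && (b == j)) || ((a == j) && (b == i)) then 0
          else conjc (U c a) * U d b.
Proof.
move=> HM a b c d p q ab cd hp hq.
have hm := HM (delta_mx c d); rewrite (ve_delta cd hq) in hm.
have <- : (M *m (delta_mx q 0 : 'cV[C]_(NN n + NN n))) p 0 = M p q by rewrite -colE mxE.
by rewrite hm (ve_entry _ ab hp) mxE triple.
Qed.

Lemma nu_diag (c s t : 'I_n) : s != t ->
  nu i j (adjmx U *m delta_mx c c *m U) s t = 0.
Proof.
move=> st; rewrite mxE; case: ifP => // hbad; rewrite triple.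
have [/andP[h1 h2]|hs] := boolP ((s != i) && (s != j)).
  rewrite (Uy_out c h1 h2). rewrite conjb; case: (c =P s) => [ec|_]; last by rewrite mul0r.
  by rewrite ec (Ux_out t h1 h2) (negbTE st) mulr0.
have [/andP[h1 h2]|ht] := boolP ((t != i) && (t != j)).
  rewrite (Uy_out c h1 h2); case: (c =P t) => [ec|_]; last by rewrite mulr0.
  by rewrite ec (Ux_out s h1 h2) eq_sym (negbTE st) conjb mul0r.
move: hs ht hbad st; rewrite !negb_and !negbK.
case/orP => /eqP-> /orP[] /eqP->; rewrite ?eqxx //= ?orbT //.
Qed.


Lemma inij {x} : ~~ ((x != i) && (x != j)) -> x = i \/ x = j.
Proof. by rewrite negb_and !negbK => /orP[/eqP->|/eqP->]; [left|right]. Qed.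

Lemma offblock (M : 'M[C]_(NN n + NN n)) :
  is_jacobi_annihilator i j U M ->
  forall (a b c d : 'I_n) (p q : NP), a != b -> c != d ->
  val p = tau0 a b -> val q = tau0 c d ->
  ~ in_blocks i j (val p) (val q) -> M p q = (p == q)%:R.
Proof.
move=> HM a b c d p q ab cd hp hq nb.
rewrite (Mform _ HM _ _ _ _ _ _ ab cd hp hq) (pq_eq ab cd hp hq).
case: ifP => hbad.
  case: (a =P c) => [ea|]; case: (b =P d) => [eb|] //=.
  exfalso; apply: nb; rewrite hp hq -ea -eb.
  by case/orP: hbad => /andP[/eqP ea' /eqP eb']; subst; [left|right; left].
have [/andP[a1 a2]|ha] := boolP ((a != i) && (a != j)).
  have [/andP[b1 b2]|hb] := boolP ((b != i) && (b != j)).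
    by rewrite (Uy_out c a1 a2) (Uy_out d b1 b2) conjb -natrM mulnb (eq_sym c a) (eq_sym d b).
  rewrite (Uy_out c a1 a2) conjb (eq_sym a c).
  case: (c =P a) => [eca|nca]; last by rewrite mul0r.
  subst c.
  have [/andP[d1 d2]|hd] := boolP ((d != i) && (d != j)).
    have db : (d == b) = false by apply/eqP => e; move: hb; rewrite -e d1 d2.
    by rewrite (Ux_out b d1 d2) db eq_sym db mulr0.
  exfalso; apply: nb; right; right; exists a; split => //; split => //; left.
  rewrite hp hq; split.
    by case: (inij hb) => ->; [left|right].
  by case: (inij hd) => ->; [left|right].
have [/andP[b1 b2]|hb] := boolP ((b != i) && (b != j)); last first.
  move: hbad ab; case: (inij ha) => ->; case: (inij hb) => ->;
  by rewrite ?eqxx ?orbT.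
rewrite (Uy_out d b1 b2) (eq_sym b d).
case: (d =P b) => [edb|ndb]; last by rewrite mulr0 andbF.
subst d.
have [/andP[c1 c2]|hc] := boolP ((c != i) && (c != j)).
  have ca : (c == a) = false by apply/eqP => e; move: ha; rewrite -e c1 c2.
  by rewrite (Ux_out a c1 c2) ca eq_sym ca conjb mul0r.
exfalso; apply: nb; right; right; exists b; split => //; split => //; right.
rewrite hp hq; split.
  by case: (inij ha) => ->; [left|right].
by case: (inij hc) => ->; [left|right].
Qed.

Definition Mdef : 'M[C]_(NN n + NN n) := \matrix_(p, q)
  match [pick st : 'I_n * 'I_n | (st.1 != st.2) && (tau0 st.1 st.2 == val q)] with
  | Some st => ve (nu i j (adjmx U *m delta_mx st.1 st.2 *m U)) p 0
  | None => 0
  end.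

Lemma Mdef_ok : is_jacobi_annihilator i j U Mdef.
Proof.
have key c d : Mdef *m ve (delta_mx c d : 'M[C]_n) =
    ve (nu i j (adjmx U *m delta_mx c d *m U)).
  case: (eqVneq c d) => [<-|cd].
    rewrite ve_diag mulmx0; apply/matrixP => p k; rewrite mxE.
    rewrite mxE big1 // => s _; rewrite big1 // => t st.
    by rewrite nu_diag // if_same.
  rewrite (ve_delta (q := Ordinal (tau_lt cd)) cd erefl) -colE.
  apply/matrixP => p k; rewrite [k]ord1 mxE mxE.
  case: pickP => [[s t] /andP[/= st /eqP e]|H].
    by have [-> ->] := tau_inj st cd e.
  by move: (H (c, d)); rewrite /= cd eqxx.
move=> A; rewrite (matrix_sum_delta A).
rewrite ve_sum mulmx_sumr mulmx_sumr mulmx_suml nu_sum ve_sum.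
apply: eq_bigr => c _.
rewrite ve_sum mulmx_sumr mulmx_sumr mulmx_suml nu_sum ve_sum.
apply: eq_bigr => d _.
by rewrite veZ -scalemxAr key -scalemxAr -scalemxAl nuZ veZ.
Qed.


Lemma main_sec :
  (exists M, is_jacobi_annihilator i j (plane_rot i j phi alpha) M) /\
  forall M : 'M[complex R]_(NN n + NN n),
    is_jacobi_annihilator i j (plane_rot i j phi alpha) M ->
    [/\
        forall p q : 'I_(NN n + NN n),
          ~ in_blocks i j (val p) (val q) -> M p q = (p == q)%:R,
        entry_is M (tau0 i j) (tau0 i j) 0,
        entry_is M (tau0 j i) (tau0 j i) 0,
        forall r : 'I_n, r != i -> r != j ->
          [/\ entry_is M (tau0 r i) (tau0 r i) (cos phi)%:C,
              entry_is M (tau0 r i) (tau0 r j) (expi (- alpha) * (sin phi)%:C),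
              entry_is M (tau0 r j) (tau0 r i) (- (expi alpha * (sin phi)%:C)) &
              entry_is M (tau0 r j) (tau0 r j) (cos phi)%:C] &
        forall r : 'I_n, r != i -> r != j ->
          [/\ entry_is M (tau0 i r) (tau0 i r) (cos phi)%:C,
              entry_is M (tau0 i r) (tau0 j r) (expi alpha * (sin phi)%:C),
              entry_is M (tau0 j r) (tau0 i r) (- (expi (- alpha) * (sin phi)%:C)) &
              entry_is M (tau0 j r) (tau0 j r) (cos phi)%:C]].
Proof.
have hji : j != i by rewrite eq_sym.
split; first by exists Mdef; apply: Mdef_ok.
move=> M HM.
have Urr r : r != i -> r != j -> plane_rot i j phi alpha r r = 1.
  by move=> h1 h2; rewrite (Ux_out r h1 h2) eqxx.
have conj1 : conjc (1 : R[i]) = 1 by apply: (conjb true).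
have conjR (x : R) : conjc (x%:C) = x%:C.
  by apply/eqP; rewrite eq_complex /= oppr0 !eqxx.
have cE1 : conjc (expi (- alpha) * (sin phi)%:C) = expi alpha * (sin phi)%:C.
  by rewrite /expi cosN sinN; simpc.
have cE2 : conjc (- (expi alpha * (sin phi)%:C)) = - (expi (- alpha) * (sin phi)%:C).
  by rewrite /expi cosN sinN; simpc.
split.
- move=> p q nb.
  have [a [b [ab hp]]] := tau_surj (ltn_ord p).
  have [c [d [cd hq]]] := tau_surj (ltn_ord q).
  exact: (offblock _ HM _ _ _ _ _ _ ab cd (esym hp) (esym hq) nb).
- move=> p q hp hq.
  by rewrite (Mform _ HM _ _ _ _ _ _ hij hij hp hq) !eqxx.
- move=> p q hp hq.
  by rewrite (Mform _ HM _ _ _ _ _ _ hji hji hp hq) !eqxx /= orbT.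
- move=> r ri rj.
  have ir : r != i := ri. 
  split=> p q hp hq.
  + rewrite (Mform _ HM _ _ _ _ _ _ ri ri hp hq) (negbTE ri) (negbTE rj) /=.
    by rewrite Urr // conj1 mul1r Uii.
  + rewrite (Mform _ HM _ _ _ _ _ _ ri rj hp hq) (negbTE ri) (negbTE rj) /=.
    by rewrite Urr // conj1 mul1r Uji.
  + rewrite (Mform _ HM _ _ _ _ _ _ rj ri hp hq) (negbTE ri) (negbTE rj) /=.
    by rewrite Urr // conj1 mul1r Uij.
  + rewrite (Mform _ HM _ _ _ _ _ _ rj rj hp hq) (negbTE ri) (negbTE rj) /=.
    by rewrite Urr // conj1 mul1r Ujj.
- move=> r ri rj.
  have ir : i != r by rewrite eq_sym.
  have jr : j != r by rewrite eq_sym.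
  split=> p q hp hq.
  + rewrite (Mform _ HM _ _ _ _ _ _ ir ir hp hq) (negbTE ri) (negbTE rj) !eqxx /= ?andbF /=.
    by rewrite (Urr r ri rj) mulr1 Uii conjR.
  + rewrite (Mform _ HM _ _ _ _ _ _ ir jr hp hq) (negbTE ri) (negbTE rj) !eqxx /= ?andbF /=.
    by rewrite (Urr r ri rj) mulr1 Uji cE1.
  + rewrite (Mform _ HM _ _ _ _ _ _ jr ir hp hq) (negbTE ri) (negbTE rj) !eqxx /= ?andbF /=.
    by rewrite (Urr r ri rj) mulr1 Uij cE2.
  + rewrite (Mform _ HM _ _ _ _ _ _ jr jr hp hq) (negbTE ri) (negbTE rj) !eqxx /= ?andbF /=.
    by rewrite (Urr r ri rj) mulr1 Ujj conjR.
Qed.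

End Mx.

Theorem theorem2p4 (R : realType) (n : nat) (i j : 'I_n) (phi alpha : R) :
  (2 <= n)%N -> (i < j)%N ->
  (exists M, is_jacobi_annihilator i j (plane_rot i j phi alpha) M) /\
  forall M : 'M[complex R]_(NN n + NN n),
    is_jacobi_annihilator i j (plane_rot i j phi alpha) M ->
    [/\ (* identity outside the distinguished principal submatrices *)
        forall p q : 'I_(NN n + NN n),
          ~ in_blocks i j (val p) (val q) -> M p q = (p == q)%:R,
        entry_is M (tau0 i j) (tau0 i j) 0,
        entry_is M (tau0 j i) (tau0 j i) 0,
        forall r : 'I_n, r != i -> r != j ->
          [/\ entry_is M (tau0 r i) (tau0 r i) (cos phi)%:C,
              entry_is M (tau0 r i) (tau0 r j) (expi (- alpha) * (sin phi)%:C),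
              entry_is M (tau0 r j) (tau0 r i) (- (expi alpha * (sin phi)%:C)) &
              entry_is M (tau0 r j) (tau0 r j) (cos phi)%:C] &
        forall r : 'I_n, r != i -> r != j ->
          [/\ entry_is M (tau0 i r) (tau0 i r) (cos phi)%:C,
              entry_is M (tau0 i r) (tau0 j r) (expi alpha * (sin phi)%:C),
              entry_is M (tau0 j r) (tau0 i r) (- (expi (- alpha) * (sin phi)%:C)) &
              entry_is M (tau0 j r) (tau0 j r) (cos phi)%:C]].

Proof.
move=> hn hlt; apply: main_sec.
by apply/eqP => e; rewrite e ltnn in hlt.
Qed.
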